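(* Let $F$ be a clause-set, and let $\mathbb{U}_F$ be the set of all $F' \subseteq F$ with $\mathrm{var}(F') = \mathrm{var}(F)$, $\delta(F') \ge 1$ and $F'$ unsatisfiable. Then $F \in \mathcal{VMU}$ if and only if $F \in \mathbb{U}_F$ and all minimal elements of $\mathbb{U}_F$ with respect to the subset relation are minimally unsatisfiable.
   Context: Literals come with a fixed-point-free involution $x \mapsto \overline{x}$; variables are positive literals. A clause is a finite set $C$ of literals with $C \cap \overline{C} = \emptyset$; a clause-set is a finite set of clauses. $\mathrm{var}(F)$, $n(F) = |\mathrm{var}(F)|$, $c(F) = |F|$, $\delta(F) = c(F) - n(F)$. $F$ is satisfiable iff some assignment of truth values makes some literal of every clause true. $F$ is minimally unsatisfiable if it is unsatisfiable and $F \setminus \{C\}$ is satisfiable for every $C \in F$. $\mathcal{VMU}$ is the class of unsatisfiable clause-sets $F$ such that every unsatisfiable $F' \subseteq F$ has $\mathrm{var}(F') = \mathrm{var}(F)$. *)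

(* Defs.v *)
From HB Require Import structures.
From mathcomp Require Import all_boot all_order all_algebra.
From mathcomp Require Import finmap.
Set Implicit Arguments. Unset Strict Implicit. Unset Printing Implicit Defensive.
Local Open Scope fset_scope.

(* Literals over a variable type V: a pair (v, b); (v,true) is the positive
   literal (= the variable v), (v,false) its complement. *)
Definition lit (V : choiceType) := (V * bool)%type.

Definition compl (V : choiceType) (x : lit V) : lit V := (x.1, ~~ x.2).

Definition is_clause (V : choiceType) (C : {fset lit V}) : Prop :=
  forall x, x \in C -> compl x \notin C.

Definition is_clauseset (V : choiceType) (F : {fset {fset lit V}}) : Prop :=
  forall C, C \in F -> is_clause C.

Definition varF (V : choiceType) (F : {fset {fset lit V}}) : {fset V} :=
  \bigcup_(C <- F) [fset x.1 | x in C].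

Definition nvar (V : choiceType) (F : {fset {fset lit V}}) : nat := #|` varF F|.
Definition ncl (V : choiceType) (F : {fset {fset lit V}}) : nat := #|` F|.

Definition delta (V : choiceType) (F : {fset {fset lit V}}) : int :=
  (ncl F)%:Z - (nvar F)%:Z.

Definition lit_true (V : choiceType) (phi : V -> bool) (x : lit V) : bool :=
  phi x.1 == x.2.

Definition satisfiable (V : choiceType) (F : {fset {fset lit V}}) : Prop :=
  exists phi : V -> bool, forall C, C \in F -> exists2 x, x \in C & lit_true phi x.

Definition MU (V : choiceType) (F : {fset {fset lit V}}) : Prop :=
  ~ satisfiable F /\ forall C, C \in F -> satisfiable (F `\ C).

Definition VMU (V : choiceType) (F : {fset {fset lit V}}) : Prop :=
  ~ satisfiable F /\
  forall F' : {fset {fset lit V}}, F' `<=` F -> ~ satisfiable F' -> varF F' = varF F.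

Definition UF (V : choiceType) (F F' : {fset {fset lit V}}) : Prop :=
  [/\ F' `<=` F, varF F' = varF F, (1 <= delta F')%R & ~ satisfiable F'].

Definition minimal_UF (V : choiceType) (F F' : {fset {fset lit V}}) : Prop :=
  UF F F' /\ forall F'', UF F F'' -> F'' `<=` F' -> F'' = F'.

(* Main.v *)
Require Import Defs.
From HB Require Import structures.
From mathcomp Require Import all_boot all_order all_algebra.
From mathcomp Require Import finmap zify.
From Stdlib Require Import Classical.
Set Implicit Arguments. Unset Strict Implicit. Unset Printing Implicit Defensive.
Local Open Scope fset_scope.

Section Aux.
Variable V : choiceType.
Implicit Types (F G A B S K L M : {fset {fset lit V}}) (W X : {fset V}).

Lemma varFP F v : reflect (exists2 C, C \in F & exists2 x, x \in C & x.1 = v) (v \in varF F).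
Proof.
rewrite /varF; apply: (iffP (@bigfcupP _ _ F v (fun C => [fset x.1 | x in C]) xpredT)).
- move=> [C /andP[CF _] /imfsetP [x /= xC ->]]; by exists C => //; exists x.
- move=> [C CF [x xC <-]]; exists C; first by rewrite CF.
  by apply/imfsetP; exists x.
Qed.

Lemma varF_sub A B : A `<=` B -> varF A `<=` varF B.
Proof.
move=> /fsubsetP AB; apply/fsubsetP => v /varFP [C CA [x xC <-]].
by apply/varFP; exists C; [exact: AB | exists x].
Qed.

Lemma varFU A B : varF (A `|` B) = varF A `|` varF B.
Proof.
apply/fsetP => v; apply/idP/idP.
- move=> /varFP [C /fsetUP [CA|CB] [x xC <-]]; apply/fsetUP.
  + by left; apply/varFP; exists C => //; exists x.
  + by right; apply/varFP; exists C => //; exists x.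
- by move=> /fsetUP [] /varFP [C CA [x xC <-]]; apply/varFP; exists C;
    rewrite ?in_fsetU ?CA ?orbT //; exists x.
Qed.

Lemma sat_sub A B : A `<=` B -> satisfiable B -> satisfiable A.
Proof. by move=> /fsubsetP AB [phi H]; exists phi => C /AB; apply: H. Qed.

Lemma sat0 : satisfiable (fset0 : {fset {fset lit V}}).
Proof. by exists (fun _ => true) => C; rewrite in_fset0. Qed.

Lemma delta1 F : (1 <= delta F)%R <-> (nvar F < ncl F)%N.
Proof. rewrite /delta; split => H; lia. Qed.

Lemma card_disj S K L : L `<=` S `\` K -> #|` K `|` L| = (#|` K| + #|` L|)%N.
Proof.
move=> /fsubsetP LS; rewrite -cardfsUI.
suff -> : K `&` L = fset0 by rewrite cardfs0 addn0.
apply/fsetP => C; rewrite in_fsetI in_fset0; apply/negP => /andP [CK /LS].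
by rewrite in_fsetD CK.
Qed.

Lemma card_varU W K L :
  (#|` varF (K `|` L) `\` W| <= #|` varF K `\` W| + #|` varF L `\` (W `|` varF K)|)%N.
Proof.
apply: leq_trans (leq_card_fsetU _ _).
apply: fsubset_leq_card; apply/fsubsetP => v.
rewrite varFU => /fsetDP [/fsetUP [vK|vL] vW]; apply/fsetUP.
  by left; apply/fsetDP.
case vK: (v \in varF K).
  by left; apply/fsetDP.
by right; apply/fsetDP; split => //; apply/fsetUP => -[]; [apply/negP| rewrite vK].
Qed.

Lemma min_exists (T : choiceType) (P : {fset T} -> Prop) (X : {fset T}) : P X ->
  exists Y, [/\ Y `<=` X, P Y & forall Z, P Z -> Z `<=` Y -> Z = Y].
Proof.
move: {2}#|` X| (leqnn #|` X|) => n; elim: n X => [|n IH] X Xn PX.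
  exists X; split => // Z _ ZX; apply/eqP; rewrite eqEfsubset ZX /=.
  move: Xn; rewrite leqn0 => /eqP X0.
  by rewrite (cardfs0_eq X0) fsub0set.
case: (classic (exists Z, [/\ P Z, Z `<=` X & Z != X])).
  move=> [Z [PZ ZX ZnX]].
  have ZXp : Z `<` X by rewrite fproperEneq ZnX ZX.
  have := fproper_ltn_card ZXp => lt.
  have [Y [YZ PY HY]] := IH Z (leq_trans lt Xn) PZ.
  exists Y; split => //; exact: fsubset_trans YZ ZX.
move=> nex; exists X; split => // Z PZ ZX; apply: NNPP => ZnX; apply: nex.
by exists Z; split => //; apply/eqP.
Qed.

Lemma nat_max (P : nat -> Prop) b : P 0 -> ~ P b -> exists n, P n /\ ~ P n.+1.
Proof.
move=> P0; elim: b => [|b IH] nPb; first by [].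
case: (classic (P b)) => Pb; first by exists b.
exact: IH.
Qed.

End Aux.


Section Aux2.
Variable V : choiceType.
Implicit Types (F G A B S K L M : {fset {fset lit V}}) (W X : {fset V}).

Definition hall S W := forall L, L `<=` S -> (#|` L| <= #|` varF L `\` W|)%N.
Definition sat_out S W (phi : V -> bool) :=
  forall C, C \in S -> exists2 x, x \in C & (x.1 \notin W) && lit_true phi x.

Lemma hallP S W : hall S W -> exists phi, sat_out S W phi.
Proof.
move: {2}#|` S| (leqnn #|` S|) => n; elim: n S W => [|n IH] S W Sn hS.
  move: Sn; rewrite leqn0 => /eqP /cardfs0_eq ->.
  by exists (fun _ => true) => C; rewrite in_fset0.
case: (classic (exists L, [/\ L `<=` S, L != fset0, L != S &
                          (#|` varF L `\` W| <= #|` L|)%N])).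
  move=> [L [LS L0 LnS Lt]].
  have LSp : L `<` S by rewrite fproperEneq LnS LS.
  have [phi1 H1] : exists phi, sat_out L W phi.
    apply: IH; first by have := fproper_ltn_card LSp; lia.
    by move=> L' L'L; apply: hS; exact: fsubset_trans L'L LS.
  have [phi2 H2] : exists phi, sat_out (S `\` L) (W `|` varF L) phi.
    apply: IH.
      have := cardfsDS LS; have := cardfs_gt0 L; rewrite L0 => ?.
      have := fsubset_leq_card LS; lia.
    move=> L' L'S.
    have hU := hS (L `|` L').
    have : L `|` L' `<=` S.
      apply/fsubsetP => C /fsetUP [] CL.
        by apply: (fsubsetP LS).
      by have := fsubsetP L'S C CL; rewrite in_fsetD => /andP [].
    move=> /hU; rewrite (card_disj L'S) => h.
    have := card_varU W L L'; lia.
  exists (fun v => if v \in varF L then phi1 v else phi2 v) => C CS.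
  case CL: (C \in L).
    have [x xC /andP [xW xt]] := H1 C CL; exists x => //; rewrite xW /=.
    rewrite /lit_true /=.
    have -> : x.1 \in varF L by apply/varFP; exists C => //; exists x.
    exact: xt.
  have CSL : C \in S `\` L by rewrite in_fsetD CL CS.
  have [x xC /andP [xW xt]] := H2 C CSL; exists x => //.
  move: xW; rewrite in_fsetU negb_or => /andP [-> xL] /=.
  by rewrite /lit_true (negbTE xL).
move=> nex.
case: (boolP (S == fset0)) => [/eqP -> | S0].
  by exists (fun _ => true) => C; rewrite in_fset0.
have [C CS] : exists C, C \in S.
  by move: S0 => /fset0Pn [C CS]; exists C.
have : (1 <= #|` varF [fset C] `\` W|)%N.
  have := hS [fset C]; rewrite cardfs1; apply.
  by apply/fsubsetP => D /fset1P ->.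
rewrite cardfs_gt0 => /fset0Pn [v /fsetDP [/varFP [D /fset1P -> [x xC xv]] vW]].
have [phi H] : exists phi, sat_out (S `\ C) (x.1 |` W) phi.
  apply: IH.
    have := cardfsD1 C S; rewrite CS; lia.
  move=> L LS.
  case: (boolP (L == fset0)) => [/eqP -> | L0].
    by rewrite cardfs0.
  have LS' : L `<=` S by apply: fsubset_trans LS (fsubsetDl _ _).
  have LnS : L != S.
    apply/eqP => LSe; move: LS; rewrite LSe => /fsubsetP /(_ C CS).
    by rewrite in_fsetD1 eqxx.
  have lt : (#|` L| < #|` varF L `\` W|)%N.
    rewrite ltnNge; apply/negP => le; apply: nex; exists L; split => //.
  suff : (#|` varF L `\` W| <= #|` varF L `\` (x.1 |` W)| + 1)%N by lia.
  rewrite -(cardfs1 x.1); apply: leq_trans (leq_card_fsetU _ _).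
  rewrite fsetUC; apply: fsubset_leq_card; apply/fsubsetP => w /fsetDP [wL wW].
  apply/fsetUP; case: (boolP (w == x.1)) => [/eqP ->|wx]; first by left; apply: fset11.
  by right; apply/fsetDP; split => //; rewrite in_fset1U negb_or wx.
exists (fun w => if w == x.1 then x.2 else phi w) => E ES.
case: (boolP (E == C)) => [/eqP -> | EC].
  by exists x => //; rewrite /lit_true /= !eqxx xv vW.
have ESC : E \in S `\ C by rewrite in_fsetD1 EC ES.
have [y yE /andP [yW yt]] := H E ESC; exists y => //.
move: yW; rewrite in_fset1U negb_or => /andP [yx ->] /=.
by rewrite /lit_true (negbTE yx).
Qed.

End Aux2.


Section Aux3.
Variable V : choiceType.
Implicit Types (F G A B S K L M : {fset {fset lit V}}) (W X : {fset V}).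

Lemma varF0 : varF (fset0 : {fset {fset lit V}}) = fset0.
Proof. apply/fsetP => v; rewrite in_fset0; apply/varFP => -[C]; by rewrite in_fset0. Qed.

Definition maxsur S W n K := [/\ K `<=` S, (n + #|` varF K `\` W| <= #|` K|)%N &
  forall K', K' `<=` S -> (#|` K'| <= n + #|` varF K' `\` W|)%N].

Lemma maxsur_ex S W : exists n K, maxsur S W n K.
Proof.
pose P n := exists K, K `<=` S /\ (n + #|` varF K `\` W| <= #|` K|)%N.
have P0 : P 0 by exists fset0; rewrite fsub0set varF0 fset0D cardfs0.
have Pb : ~ P (#|` S|).+1.
  move=> [K [KS HK]]; have := fsubset_leq_card KS; lia.
have [n [[K [KS HK]] nP]] := nat_max P0 Pb.
exists n, K; split => // K' K'S; rewrite leqNgt; apply/negP => lt; apply: nP.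
by exists K'; split => //; lia.
Qed.

Lemma maxsur0 S W K : maxsur S W 0 K -> maxsur S W 0 fset0.
Proof.
by move=> [_ _ H]; split => //; rewrite ?fsub0set // varF0 fset0D cardfs0.
Qed.

Lemma maxsur_hall S W n K : maxsur S W n K -> hall (S `\` K) (W `|` varF K).
Proof.
move=> [KS HK Hm] L LS.
have : K `|` L `<=` S.
  apply/fsubsetP => C /fsetUP [] CL; first by apply: (fsubsetP KS).
  by have := fsubsetP LS C CL; rewrite in_fsetD => /andP [].
move=> /Hm; rewrite (card_disj LS) => h.
have := card_varU W K L; lia.
Qed.

Lemma autarky X A B M : varF A `<=` X -> satisfiable A ->
  (exists phi, sat_out B X phi) -> M `<=` A `|` B -> satisfiable M.
Proof.
move=> AX [psi Hp] [phi Hf] /fsubsetP MAB.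
exists (fun v => if v \in X then psi v else phi v) => C /MAB /fsetUP [] CA.
  have [x xC xt] := Hp C CA; exists x => //; rewrite /lit_true /=.
  have -> : x.1 \in X by apply: (fsubsetP AX); apply/varFP; exists C => //; exists x.
  exact: xt.
have [x xC /andP [xX xt]] := Hf C CA; exists x => //.
by rewrite /lit_true /= (negbTE xX).
Qed.

Lemma priv (H : {fset {fset lit V}}) W : (forall C, C \in H -> exists v, [/\ v \in varF [fset C], v \notin W &
   v \notin varF (H `\ C)]) -> (#|` H| <= #|` varF H `\` W|)%N.
Proof.
move: {2}#|` H| (leqnn #|` H|) => n; elim: n H => [|n IH] H Hn hP.
  by move: Hn; rewrite leqn0 => /eqP ->.
case: (boolP (H == fset0)) => [/eqP -> | H0]; first by rewrite cardfs0.
move: H0 => /fset0Pn [C CH].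
have [v [vC vW vH]] := hP C CH.
have IH' : (#|` H `\ C| <= #|` varF (H `\ C) `\` W|)%N.
  apply: IH; first by have := cardfsD1 C H; rewrite CH; lia.
  move=> D /fsetD1P [DC DH]; have [w [wD wW wH]] := hP D DH; exists w; split => //.
  apply: contra wH; apply/fsubsetP; apply: varF_sub.
  apply/fsubsetP => E /fsetD1P [ED /fsetD1P [_ EH]]; exact/fsetD1P.
have := cardfsD1 C H; rewrite CH => ->.
have sub : v |` (varF (H `\ C) `\` W) `<=` varF H `\` W.
  apply/fsubsetP => w /fset1UP [->|/fsetDP [wH wW]]; apply/fsetDP; split => //.
    by apply: (fsubsetP (varF_sub _)) vC; apply/fsubsetP => E /fset1P ->.
  by apply: (fsubsetP (varF_sub _)) wH; apply: fsubsetDl.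
have := fsubset_leq_card sub; rewrite cardfsU1 in_fsetD (negbTE vH) /=.
rewrite andbF => h; apply: leq_trans _ h; exact: IH'.
Qed.

Lemma tarsi F : MU F -> (nvar F < ncl F)%N.
Proof.
move=> [Fu Fm]; have [n [K HK]] := maxsur_ex F fset0.
pose K' := if n == 0 then fset0 else K.
have HK' : maxsur F fset0 n K'.
  rewrite /K'; case: eqP => // n0; move: HK; rewrite n0; exact: maxsur0.
case: (eqVneq K' F) => [KF|KnF].
  rewrite /K' in KF; case: eqP KF => [_ F0|n0 KF].
    by exfalso; apply: Fu; rewrite -F0; apply: sat0.
  move: HK => [_ h _]; rewrite KF fsetD0 in h.
  rewrite /nvar /ncl; lia.
exfalso; apply: Fu.
have [KS _ _] := HK'.
have [C CF CK] : exists2 C, C \in F & C \notin K'.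
  apply/fsubsetPn; apply: contra KnF => FK; by rewrite eqEfsubset KS FK.
have [phi Hphi] := hallP (maxsur_hall HK').
apply: (autarky (X := fset0 `|` varF K') (A := K') (B := F `\` K') (M := F)).
- by rewrite fset0U fsubset_refl.
- apply: sat_sub (Fm C CF); apply/fsubsetP => D DK; apply/fsetD1P; split.
    by apply: contraNneq CK => <-.
  exact: (fsubsetP KS).
- by exists phi.
- apply/fsubsetP => D DF; apply/fsetUP; case: (boolP (D \in K')) => DK; [left|right] => //.
  by rewrite in_fsetD DK DF.
Qed.

Lemma mu_sub F : ~ satisfiable F -> exists F0, F0 `<=` F /\ MU F0.
Proof.
move=> Fu.
have [Y [YF [_ Yu] Ym]] := @min_exists _ (fun Y => Y `<=` F /\ ~ satisfiable Y) F
  (conj (fsubset_refl F) Fu).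
exists Y; split => //; split => // C CY; apply: NNPP => nsat.
have YCF : Y `\ C `<=` F by apply: fsubset_trans (fsubsetDl _ _) YF.
have := Ym (Y `\ C) (conj YCF nsat) (fsubsetDl _ _) => e.
by move: CY; rewrite -e in_fsetD1 eqxx.
Qed.

End Aux3.

Unset Implicit Arguments.


Lemma ar1 (a b n : nat) : n <> 0 -> (n + b <= a)%N -> (a <= b)%N -> False.
Proof. lia. Qed.
Lemma ar2 (a b c : nat) : (b + 2 <= a)%N -> a = (1 + c)%N -> (b < c)%N.
Proof. lia. Qed.

Theorem lemma4p5 (V : choiceType) (F : {fset {fset lit V}}) :
  is_clauseset F ->
  (VMU F <-> UF F F /\ (forall F', minimal_UF F F' -> MU F')).
Proof.
move=> _; split.
- move=> [Fu Fv].
  have hU : forall N, N `<=` F -> MU N -> UF F N.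
    move=> N NF Nmu; split => //; first exact: (Fv N NF Nmu.1).
      by apply/delta1; exact: tarsi.
    exact: Nmu.1.
  split.
  + have [F0 [F0F F0mu]] := mu_sub Fu.
    split => //; apply/delta1.
    have := tarsi F0mu; have := fsubset_leq_card F0F.
    rewrite /nvar /ncl (Fv F0 F0F F0mu.1); lia.
  + move=> F' [[F'F F'v F'd F'u] F'm]; split => // C CF'; apply: NNPP => ns.
    have [N [NC Nmu]] := mu_sub ns.
    have NF' : N `<=` F' := fsubset_trans NC (fsubsetDl _ _).
    have NF := fsubset_trans NF' F'F.
    have e := F'm N (hU N NF Nmu) NF'.
    by move: NC; rewrite e => /fsubsetP /(_ C CF'); rewrite in_fsetD1 eqxx.
- move=> [[_ _ Fd Fu] HM]; split => // F' F'F F'u.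
  apply: NNPP => ne.
  have [F0 [F0F' F0mu]] := mu_sub F'u.
  have F0F := fsubset_trans F0F' F'F.
  have vF0 : varF F0 `<=` varF F := varF_sub F0F.
  have hF0 : varF F0 <> varF F.
    move=> e; apply: ne; apply/eqP; rewrite eqEfsubset varF_sub //= -e.
    exact: varF_sub.
  have tF0 := tarsi F0mu.
  pose P G := [/\ F0 `<=` G, G `<=` F, varF G = varF F & (nvar G < ncl G)%N].
  have [G [GF PG Gm]] := @min_exists _ P F (And4 F0F (fsubset_refl F) erefl (proj1 (delta1 F) Fd)).
  case: PG => F0G _ GvF Gd.
  have Gu : ~ satisfiable G := fun s => F0mu.1 (sat_sub F0G s).
  have UG : UF F G by split => //; apply/delta1.
  have [M [MG UM Mm]] := @min_exists _ (UF F) G UG.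
  have Mmu : MU M := HM M (conj UM (fun F'' h1 h2 => Mm F'' h1 h2)).
  case: UM => MF MvF Md Mu.
  set W := varF F0 in vF0 hF0 tF0.
  set H := G `\` F0.
  have GFH : G = F0 `|` H.
    apply/fsetP => C; rewrite in_fsetU in_fsetD.
    case CF0: (C \in F0) => /=; last by [].
    by rewrite (fsubsetP F0G C CF0).
  have MF0G : M `|` F0 = G.
    apply: Gm.
      split; first exact: fsubsetUr.
      - apply/fsubsetP => D /fsetUP [] D1; [exact: (fsubsetP MF) | exact: (fsubsetP F0F)].
      - by rewrite varFU MvF; apply/fsetUidPl.
      - rewrite /nvar /ncl varFU MvF (fsetUidPl _ _ vF0).
        have := fsubset_leq_card (fsubsetUl M F0); have := proj1 (delta1 M) Md.
        rewrite /nvar /ncl MvF; lia.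
    apply/fsubsetP => D /fsetUP [] D1; [exact: (fsubsetP MG) | exact: (fsubsetP F0G)].
  have HM' : H `<=` M.
    apply/fsubsetP => C /fsetDP [CG CF0]; move: CG.
    by rewrite -MF0G in_fsetU (negbTE CF0) orbF.
  have H0 : H != fset0.
    apply/negP => /eqP H0; apply: hF0; rewrite -GvF GFH H0 fsetU0 //.
  have [n [K HK]] := maxsur_ex H W.
  pose K' := if n == 0 then fset0 else K.
  have HK' : maxsur H W n K'.
    rewrite /K'; case: eqP => // n0; move: HK; rewrite n0; exact: maxsur0.
  have aut : K' != H -> False.
    move=> KnH; have [KH _ _] := HK'.
    have [C CH CK] : exists2 C, C \in H & C \notin K'.
      apply/fsubsetPn; apply: contra KnH => HK2; by rewrite eqEfsubset KH HK2.
    have [phi Hphi] := hallP (maxsur_hall HK').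
    apply: Mmu.1.
    apply: (autarky (X := W `|` varF K') (A := M `\` (H `\` K')) (B := H `\` K') (M := M)).
    - have sub : M `\` (H `\` K') `<=` F0 `|` K'.
        apply/fsubsetP => D /fsetDP [DM DHK]; have DG := fsubsetP MG D DM.
        apply/fsetUP; case: (boolP (D \in F0)) => DF0; [by left|right].
        have DH : D \in H by rewrite in_fsetD DF0 DG.
        by move: DHK; rewrite in_fsetD DH andbT negbK.
      by rewrite -varFU; apply: varF_sub.
    - apply: sat_sub (Mmu.2 C (fsubsetP HM' C CH)).
      apply/fsubsetP => D /fsetDP [DM DHK]; apply/fsetD1P; split => //.
      by apply: contraNneq DHK => ->; rewrite in_fsetD CK CH.
    - by exists phi.
    - apply/fsubsetP => D DM; apply/fsetUP.
      case: (boolP (D \in H `\` K')) => h; [right|left] => //; exact/fsetDP.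
  have KH : K' = H by case: (eqVneq K' H) => [//|/aut []].
  rewrite /K' in KH; case: eqP KH => [_ KH|n0 KH].
    by move: H0; rewrite -KH eqxx.
  rewrite KH in HK; case: HK => _ Hsur _.
  have Gcard : (#|` varF G| + 2 <= #|` G|)%N.
    have cG : #|` G| = (#|` F0| + #|` H|)%N.
      by rewrite {1}GFH (@card_disj _ G); last exact: fsubset_refl.
    have := card_varU fset0 F0 H; rewrite !fsetD0 fset0U -GFH.
    move: tF0; rewrite /nvar /ncl -/W; lia.
  have pv := @priv _ H W.
  apply: (@ar1 _ _ _ n0 Hsur).
  apply: pv => C CH.
  have [CG CF0] : C \in G /\ C \notin F0 by move: CH; rewrite in_fsetD => /andP [].
  have ne' : varF (G `\ C) != varF G.
    apply/negP => /eqP e.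
    have PGC : P (G `\ C).
      split.
      - apply/fsubsetP => D DF0; apply/fsetD1P; split.
          by apply: contraNneq CF0 => <-.
        exact: (fsubsetP F0G).
      - exact: fsubset_trans (fsubsetDl _ _) GF.
      - by rewrite e.
      - rewrite /nvar /ncl e; have := cardfsD1 C G; rewrite CG => h.
        exact: (@ar2 _ _ _ Gcard h).
    have := Gm (G `\ C) PGC (fsubsetDl _ _) => e2.
    by move: CG; rewrite -e2 in_fsetD1 eqxx.
  have : ~~ (varF G `<=` varF (G `\ C)).
    apply: contra ne' => h; rewrite eqEfsubset h varF_sub //; exact: fsubsetDl.
  move=> /fsubsetPn [v vG vGC]; exists v; split.
  - move: vG => /varFP [D DG [x xD xv]].
    case: (eqVneq D C) => [DC|DC].
      by apply/varFP; exists C; [exact: fset11 | exists x; rewrite -?DC].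
    by exfalso; apply: (negP vGC); apply/varFP; exists D;
      [rewrite in_fsetD1 DC DG | exists x].
  - apply: contra vGC; apply: (fsubsetP (varF_sub _)).
    apply/fsubsetP => D DF0; apply/fsetD1P; split.
      by apply: contraNneq CF0 => <-.
    exact: (fsubsetP F0G).
  - apply: contra vGC; apply: (fsubsetP (varF_sub _)).
    apply/fsubsetP => D /fsetD1P [DC DH]; apply/fsetD1P; split => //.
    by move: DH; rewrite in_fsetD => /andP [].
Qed.
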